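(* Let $V$ be $\eta_*$-regular and $t=N^{\omega-1/3}$ with $\phi_*/2>1/3-\omega>0$. For real $E$ write $\xi(E)=a+bi$ ($a,b$ real). Then for all $E$ with $a_-\le a\le 3/4$, one has $b\asymp t|a-a_-|^{1/2}$.
   Context: $V=\mathrm{diag}(V_1\le\dots\le V_N)$ deterministic real, $\mu_V=\frac1N\sum_i\delta_{V_i}$, $m_V(z)=\int\frac{d\mu_V(x)}{x-z}$. $V$ is $\eta_*$-regular ($\eta_*=N^{-\phi_*}$, $0<\phi_*\le2/3$) if for some $C_V$: $C_V^{-1}\frac{\eta}{\sqrt{|E|+\eta}}\le\mathrm{Im}\,m_V(E+i\eta)\le C_V\frac{\eta}{\sqrt{|E|+\eta}}$ for $-1\le E\le0$, $\eta_*\le\eta\le10$; $C_V^{-1}\sqrt{|E|+\eta}\le\mathrm{Im}\,m_V\le C_V\sqrt{|E|+\eta}$ for $0\le E\le1$, $\eta_*^{1/2}\sqrt{|E|}+\eta_*\le\eta\le10$; no $V_i\in[-1,-\eta_*]$; $\|V\|\le N^{C_V}$. $m_{fc,t}$ solves $m_{fc,t}(z)=m_V(z+tm_{fc,t}(z))$ (unique solution with positive imaginary part), $\xi(z)=z+tm_{fc,t}(z)$, extended to real $E$ as boundary values. $\xi_-=a_-\in[-3/4,3/4]$ is the unique solution in that interval of $1=t\int\frac{d\mu_V(x)}{(x-\xi_-)^2}$ (it satisfies $-\xi_-\asymp t^2$), and $E_-$ is defined by $\xi(E_-)=\xi_-$. *)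

(* Defs.v *)
(* classical reals. Complex numbers are represented by
   their real and imaginary parts. *)
From Stdlib Require Import Reals.
Open Scope R_scope.

Fixpoint rsum (n : nat) (f : nat -> R) : R :=
  match n with O => 0 | S k => rsum k f + f k end.

(* V : nat -> R, with entries V 0 <= ... <= V (N-1)  (paper's V_1..V_N). *)
(* m_V(x+iy) = (1/N) sum_i 1/(V_i - (x+iy)) : real and imaginary parts *)
Definition mV_re (N : nat) (V : nat -> R) (x y : R) : R :=
  / INR N * rsum N (fun i => (V i - x) / ((V i - x) ^ 2 + y ^ 2)).
Definition mV_im (N : nat) (V : nat -> R) (x y : R) : R :=
  / INR N * rsum N (fun i => y / ((V i - x) ^ 2 + y ^ 2)).

Definition sorted_V (N : nat) (V : nat -> R) : Prop :=
  forall i j, (i <= j < N)%nat -> V i <= V j.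

Definition regular (N : nat) (V : nat -> R) (etas CV : R) : Prop :=
  (forall E eta, -1 <= E <= 0 -> etas <= eta <= 10 ->
     / CV * (eta / sqrt (Rabs E + eta)) <= mV_im N V E eta /\
     mV_im N V E eta <= CV * (eta / sqrt (Rabs E + eta))) /\
  (forall E eta, 0 <= E <= 1 ->
     sqrt etas * sqrt (Rabs E) + etas <= eta <= 10 ->
     / CV * sqrt (Rabs E + eta) <= mV_im N V E eta /\
     mV_im N V E eta <= CV * sqrt (Rabs E + eta)) /\
  (forall i, (i < N)%nat -> ~ (-1 <= V i <= - etas)) /\
  (forall i, (i < N)%nat -> Rabs (V i) <= Rpower (INR N) CV).

(* (mre, mim) is a solution of m_{fc,t}(z) = m_V(z + t m_{fc,t}(z)) with
   Im m_{fc,t} > 0 on the upper half plane z = E + i eta, eta > 0. *)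
Definition is_mfc (N : nat) (V : nat -> R) (t : R) (mre mim : R -> R -> R) : Prop :=
  forall E eta, 0 < eta ->
    0 < mim E eta /\
    mre E eta = mV_re N V (E + t * mre E eta) (eta + t * mim E eta) /\
    mim E eta = mV_im N V (E + t * mre E eta) (eta + t * mim E eta).

(* xi(E) = a + i b is the boundary value lim_{eta -> 0+} xi(E + i eta),
   where xi(z) = z + t m_{fc,t}(z). *)
Definition xi_boundary (t : R) (mre mim : R -> R -> R) (E a b : R) : Prop :=
  forall eps, 0 < eps -> exists delta, 0 < delta /\
    forall eta, 0 < eta < delta ->
      Rabs (E + t * mre E eta - a) < eps /\
      Rabs (eta + t * mim E eta - b) < eps.

Definition is_xi_minus (N : nat) (V : nat -> R) (t am : R) : Prop :=
  -3/4 <= am <= 3/4 /\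
  (forall i, (i < N)%nat -> V i <> am) /\
  1 = t * (/ INR N * rsum N (fun i => / (V i - am) ^ 2)).

(* Main.v *)
Require Import Defs.
From Stdlib Require Import Reals Lra Psatz ZArith.
From Coquelicot Require Import Coquelicot.
Open Scope R_scope.

Lemma rsum_ext n f g : (forall i, (i<n)%nat -> f i = g i) -> rsum n f = rsum n g.
Proof. induction n; simpl; intros H; auto. rewrite IHn by (intros; apply H; lia). rewrite H by lia. auto. Qed.
Lemma rsum_le n f g : (forall i, (i<n)%nat -> f i <= g i) -> rsum n f <= rsum n g.
Proof. induction n; simpl; intros H; [lra|]. assert (f n <= g n) by (apply H; lia).
  assert (rsum n f <= rsum n g) by (apply IHn; intros; apply H; lia). lra. Qed.
Lemma rsum_lt n f g : (0<n)%nat -> (forall i, (i<n)%nat -> f i < g i) -> rsum n f < rsum n g.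
Proof. destruct n; [lia|]. intros _ H; simpl.
  assert (f n < g n) by (apply H; lia).
  assert (rsum n f <= rsum n g) by (apply rsum_le; intros; left; apply H; lia). lra. Qed.
Lemma rsum_plus n f g : rsum n (fun i => f i + g i) = rsum n f + rsum n g.
Proof. induction n; simpl; [lra|]. rewrite IHn; lra. Qed.
Lemma rsum_scal n c f : rsum n (fun i => c * f i) = c * rsum n f.
Proof. induction n; simpl; [lra|]. rewrite IHn; lra. Qed.
Lemma rsum_nonneg n f : (forall i, (i<n)%nat -> 0 <= f i) -> 0 <= rsum n f.
Proof. intros H. apply Rle_trans with (rsum n (fun _ => 0)).
  - clear H; induction n; simpl; lra.
  - apply rsum_le; auto. Qed.
Lemma rsum_term n f i : (forall j, (j<n)%nat -> 0 <= f j) -> (i<n)%nat -> f i <= rsum n f.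
Proof. induction n; intros H Hi; [lia|]. simpl.
  destruct (Nat.eq_dec i n) as [->|Hne].
  - assert (0 <= rsum n f) by (apply rsum_nonneg; intros; apply H; lia). lra.
  - assert (f i <= rsum n f) by (apply IHn; [intros; apply H; lia| lia]).
    assert (0 <= f n) by (apply H; lia). lra. Qed.

Definition avg (N : nat) (f : nat -> R) := / INR N * rsum N f.

Lemma INRN_pos N : (0 < N)%nat -> 0 < INR N.
Proof. intros; apply lt_0_INR; auto. Qed.

Lemma avg_le N f g : (0<N)%nat -> (forall i, (i<N)%nat -> f i <= g i) -> avg N f <= avg N g.
Proof. intros HN H. unfold avg. apply Rmult_le_compat_l.
  - left; apply Rinv_0_lt_compat, INRN_pos; auto.
  - apply rsum_le; auto. Qed.
Lemma avg_lt N f g : (0<N)%nat -> (forall i, (i<N)%nat -> f i < g i) -> avg N f < avg N g.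
Proof. intros HN H. unfold avg. apply Rmult_lt_compat_l.
  - apply Rinv_0_lt_compat, INRN_pos; auto.
  - apply rsum_lt; auto. Qed.
Lemma avg_ext N f g : (forall i, (i<N)%nat -> f i = g i) -> avg N f = avg N g.
Proof. intros; unfold avg; rewrite (rsum_ext N f g); auto. Qed.
Lemma avg_lin N f g c : avg N (fun i => f i + c * g i) = avg N f + c * avg N g.
Proof. unfold avg. rewrite rsum_plus, rsum_scal. ring. Qed.
Lemma avg_scal N f c : avg N (fun i => c * f i) = c * avg N f.
Proof. unfold avg. rewrite rsum_scal. ring. Qed.
Lemma avg_nonneg N f : (forall i, (i<N)%nat -> 0 <= f i) -> 0 <= avg N f.
Proof. intros H. unfold avg. apply Rmult_le_pos.
  - destruct N. { simpl. rewrite Rinv_0; lra. } left; apply Rinv_0_lt_compat, INRN_pos; lia.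
  - apply rsum_nonneg; auto. Qed.
Lemma avg_term N f i : (forall j, (j<N)%nat -> 0 <= f j) -> (i<N)%nat -> / INR N * f i <= avg N f.
Proof. intros H Hi. unfold avg. apply Rmult_le_compat_l.
  - left; apply Rinv_0_lt_compat, INRN_pos; lia.
  - apply rsum_term; auto. Qed.

Definition Gf N (V : nat -> R) x y := avg N (fun i => / ((V i - x)^2 + y^2)).

Lemma inv_sq_nonneg u v : 0 <= / (u^2 + v^2).
Proof. destruct (Req_dec (u^2+v^2) 0) as [E|E].
  - rewrite E, Rinv_0; lra.
  - left; apply Rinv_0_lt_compat. assert (0 <= u^2 + v^2) by nra. lra. Qed.

Lemma Gf_nonneg N V x y : 0 <= Gf N V x y.
Proof. apply avg_nonneg; intros; apply inv_sq_nonneg. Qed.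

Lemma mV_im_Gf N V x y : mV_im N V x y = y * Gf N V x y.
Proof. unfold mV_im, Gf. rewrite <- avg_scal. reflexivity. Qed.

Lemma Gf_mono N V x y1 y2 : (0<N)%nat -> 0 <= y1 <= y2 ->
  (forall i, (i<N)%nat -> 0 < (V i - x)^2 + y1^2) -> Gf N V x y2 <= Gf N V x y1.
Proof. intros HN Hy H. apply avg_le; auto. intros i Hi. apply Rinv_le_contravar; auto.
  assert (y1^2 <= y2^2) by nra. lra. Qed.

Lemma lim_rsum n (f : nat -> nat -> R) (L : nat -> R) :
  (forall i, (i<n)%nat -> is_lim_seq (fun k => f k i) (L i)) ->
  is_lim_seq (fun k => rsum n (f k)) (rsum n L).
Proof. induction n; intros H; simpl.
  - apply is_lim_seq_const.
  - apply is_lim_seq_plus'. apply IHn; intros; apply H; lia. apply H; lia. Qed.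

Lemma lim_fin u l : is_lim_seq u (Finite l) -> Lim_seq u = l.
Proof. intros H; apply is_lim_seq_unique in H; rewrite H; reflexivity. Qed.

Lemma eta_facts : forall d, 0 < d -> exists M : nat, forall n, (M <= n)%nat -> 0 < / (INR n + 1) < d.
Proof. intros d Hd. destruct (archimed (/ d)) as [H1 _].
  assert (0 <= IZR (up (/d))). { assert (0 < /d) by (apply Rinv_0_lt_compat; auto). lra. }
  exists (Z.to_nat (up (/ d))). intros n Hn.
  assert (INR n + 1 > / d).
  { apply le_INR in Hn. rewrite INR_IZR_INZ in Hn. rewrite Z2Nat.id in Hn.
    lra. apply le_IZR; lra. }
  assert (0 <= INR n) by apply pos_INR.
  split. apply Rinv_0_lt_compat; lra.
  rewrite <- (Rinv_inv d). apply Rinv_lt_contravar. 2: lra.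
  apply Rmult_lt_0_compat. apply Rinv_0_lt_compat; auto. lra. Qed.

Lemma limit_facts N V t mre mim E a b :
  (0 < N)%nat -> 0 < t ->
  is_mfc N V t mre mim -> xi_boundary t mre mim E a b ->
  0 <= b /\ (forall i, (i<N)%nat -> 0 < (V i - a)^2 + b^2) /\
  t * Gf N V a b <= 1 /\ b = t * b * Gf N V a b.
Proof.
  intros HN Ht Hm Hx.
  set (eta := fun n : nat => / (INR n + 1)).
  set (xs := fun n => E + t * mre E (eta n)).
  set (ys := fun n => eta n + t * mim E (eta n)).
  assert (Heta : forall n, 0 < eta n).
  { intros n; unfold eta; apply Rinv_0_lt_compat. pose proof (pos_INR n); lra. }
  assert (Lx : is_lim_seq xs a /\ is_lim_seq ys b).
  { split; apply is_lim_seq_Reals; intros e He; destruct (Hx e He) as [d [Hd Hd2]];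
    destruct (eta_facts d Hd) as [M HM]; exists M; intros n Hn; unfold Rdist;
    destruct (Hd2 (eta n) (HM n Hn)); auto. }
  destruct Lx as [Lx Ly].
  assert (Le : is_lim_seq eta 0).
  { apply is_lim_seq_Reals; intros e He. destruct (eta_facts e He) as [M HM]; exists M; intros n Hn; unfold Rdist.
    destruct (HM n Hn). rewrite Rabs_right; unfold eta in *; lra. }
  set (G := fun n => Gf N V (xs n) (ys n)).
  assert (Hrel : forall n, 0 < ys n /\ ys n = eta n + t * ys n * G n).
  { intros n. destruct (Hm E (eta n) (Heta n)) as [H1 [_ H3]].
    assert (Hmim : mim E (eta n) = ys n * G n).
    { unfold G, ys, xs. rewrite <- mV_im_Gf. exact H3. }
    pose proof (Heta n).
    split. unfold ys; nra. unfold ys at 1. rewrite Hmim. ring. }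
  assert (HtG : forall n, t * G n < 1).
  { intros n. destruct (Hrel n) as [H1 H2]. pose proof (Heta n). nra. }
  assert (HQ : forall i, (i<N)%nat -> forall n, t / INR N < (V i - xs n)^2 + (ys n)^2).
  { intros i Hi n. pose proof (HtG n). destruct (Hrel n) as [Hy _].
    assert (Hq : 0 < (V i - xs n)^2 + (ys n)^2). { assert (0 < ys n ^2) by (apply pow_lt; auto). assert (0 <= (V i - xs n)^2) by apply pow2_ge_0. lra. }
    assert (/ INR N * / ((V i - xs n)^2 + (ys n)^2) <= G n).
    { unfold G, Gf. apply (avg_term N (fun i => / ((V i - xs n) ^ 2 + ys n ^ 2))); auto.
      intros; apply inv_sq_nonneg. }
    pose proof (INRN_pos N HN).
    assert (t * (/ INR N * / ((V i - xs n)^2 + (ys n)^2)) < 1) by nra.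
    apply (Rmult_lt_reg_r (/ ((V i - xs n)^2 + (ys n)^2))). apply Rinv_0_lt_compat; auto.
    rewrite Rinv_r by lra. unfold Rdiv. lra. }
  assert (LQ : forall i, is_lim_seq (fun n => (V i - xs n)^2 + (ys n)^2) ((V i - a)^2 + b^2)).
  { intros i. apply is_lim_seq_ext with (fun n => (V i - xs n) * (V i - xs n) + ys n * ys n).
    intros; ring. replace ((V i - a)^2 + b^2) with ((V i - a)*(V i - a) + b*b) by ring.
    apply is_lim_seq_plus'. apply is_lim_seq_mult'; apply is_lim_seq_minus'; auto; apply is_lim_seq_const.
    apply is_lim_seq_mult'; auto. }
  assert (HQpos : forall i, (i<N)%nat -> 0 < (V i - a)^2 + b^2).
  { intros i Hi. assert (t / INR N <= (V i - a)^2 + b^2).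
    { assert (H := is_lim_seq_le (fun _ => t / INR N) _ (Finite (t / INR N)) _
        (fun n => Rlt_le _ _ (HQ i Hi n)) (is_lim_seq_const _) (LQ i)). exact H. }
    assert (0 < t / INR N) by (apply Rdiv_lt_0_compat; auto; apply INRN_pos; auto). lra. }
  assert (LG : is_lim_seq G (Gf N V a b)).
  { unfold G, Gf, avg. apply is_lim_seq_mult'. apply is_lim_seq_const.
    apply lim_rsum. intros i Hi.
    apply (is_lim_seq_inv _ (Finite ((V i - a)^2 + b^2))). apply LQ.
    intro Hc. injection Hc. pose proof (HQpos i Hi). lra. }
  assert (Hb : 0 <= b).
  { assert (H := is_lim_seq_le (fun _ => 0) ys (Finite 0) (Finite b)
        (fun n => Rlt_le _ _ (proj1 (Hrel n))) (is_lim_seq_const _) Ly). exact H. }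
  split; auto. split; auto. split.
  - assert (H := is_lim_seq_le (fun n => t * G n) (fun _ => 1) (Finite (t * Gf N V a b)) (Finite 1)
      (fun n => Rlt_le _ _ (HtG n)) (is_lim_seq_mult' _ _ _ _ (is_lim_seq_const t) LG) (is_lim_seq_const _)).
    exact H.
  - assert (L2 : is_lim_seq (fun n => eta n + t * ys n * G n) (0 + t * b * Gf N V a b)).
    { apply is_lim_seq_plus'; auto. apply is_lim_seq_mult'; auto. apply is_lim_seq_mult'; auto. apply is_lim_seq_const. }
    apply is_lim_seq_ext with (v := ys) in L2. 2:{ intros n; symmetry; apply Hrel. }
    apply lim_fin in L2. apply lim_fin in Ly. rewrite Ly in L2. injection L2. lra.
Qed.

Lemma div_le_div P Q A B : 0 < A -> 0 < B -> P * B <= Q * A -> P / A <= Q / B.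
Proof. intros HA HB H. unfold Rdiv.
  apply (Rmult_le_reg_r (A * B)). nra.
  replace (P * / A * (A * B)) with (P * B) by (field; lra).
  replace (Q * / B * (A * B)) with (Q * A) by (field; lra). auto. Qed.

Lemma T1 e m : 0 < m -> m^2 <= e^2 -> /(e^2+0^2) <= 2 * /(e^2+m^2).
Proof. intros Hm He. assert (0 < m^2) by nra.
  replace (/(e^2+0^2)) with (1/(e^2+0^2)) by (unfold Rdiv; ring).
  replace (2 * /(e^2+m^2)) with (2/(e^2+m^2)) by (unfold Rdiv; ring).
  apply div_le_div; nra. Qed.


Lemma sq_pos e : e <> 0 -> 0 < e^2.
Proof. intros; nra. Qed.

Lemma T2 e b : e <> 0 -> /(e^2+0^2) = /(e^2+b^2) + b^2 * /(e^2*(e^2+b^2)).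
Proof. intros He. pose proof (sq_pos e He). assert (0 <= b^2) by nra.
  field. split; lra. Qed.

Lemma T3 e u m b P0 : 0 < u -> 0 < m -> e <> 0 -> m^2 + b^2 <= P0 ->
  /(e^2+u^2) <= P0 * /(e^2*(e^2+b^2)) + 2 * /(e^2+m^2).
Proof. intros Hu Hm He HP. pose proof (sq_pos e He). assert (0 <= b^2) by nra.
  assert (0 < u^2) by nra. assert (0 < m^2) by nra.
  assert (0 <= /(e^2+m^2)) by (left; apply Rinv_0_lt_compat; lra).
  assert (0 <= /(e^2*(e^2+b^2))) by (left; apply Rinv_0_lt_compat; nra).
  destruct (Rle_lt_dec (e^2) (m^2)).
  - assert (/(e^2+u^2) <= P0 * /(e^2*(e^2+b^2))); [|nra].
    replace (/(e^2+u^2)) with (1/(e^2+u^2)) by (unfold Rdiv; ring).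
    replace (P0 * /(e^2*(e^2+b^2))) with (P0/(e^2*(e^2+b^2))) by (unfold Rdiv; ring).
    apply div_le_div; try nra.
  - assert (/(e^2+u^2) <= 2 * /(e^2+m^2)); [|nra].
    replace (/(e^2+u^2)) with (1/(e^2+u^2)) by (unfold Rdiv; ring).
    replace (2 * /(e^2+m^2)) with (2/(e^2+m^2)) by (unfold Rdiv; ring).
    apply div_le_div; nra. Qed.

Lemma T4 e u b : 0 < u -> u^2/4 <= e^2 -> /(e^2*(e^2+b^2)) <= 20/u^2 * /(e^2+u^2).
Proof. intros Hu He. assert (0 < u^2) by nra. assert (0 < e^2) by nra. assert (0 <= b^2) by nra.
  replace (/(e^2*(e^2+b^2))) with (1/(e^2*(e^2+b^2))) by (unfold Rdiv; ring).
  replace (20/u^2 * /(e^2+u^2)) with (20/(u^2*(e^2+u^2))) by (field; lra).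
  apply div_le_div; try nra.
  Qed.

Lemma T5 e u d : 0 < u -> u/2 <= e -> e <= d ->
  /(e^2+0^2) <= /(d^2+0^2) + 20*(d-e)/u * /(e^2+u^2).
Proof. intros Hu He Hd. assert (0 < e) by lra. assert (0 < d) by lra.
  assert (Hx : /(e^2+0^2) - /(d^2+0^2) = (d-e)*(d+e)/(e^2*d^2)) by (field; lra).
  assert (Hy : 20*(d-e)/u * /(e^2+u^2) = 20*(d-e)/(u*(e^2+u^2))) by (field; nra).
  assert ((d-e)*(d+e)/(e^2*d^2) <= 20*(d-e)/(u*(e^2+u^2))); [|lra].
  apply div_le_div; [apply Rmult_lt_0_compat; apply pow_lt; lra| apply Rmult_lt_0_compat; [lra|]; assert (0 < u^2) by (apply pow_lt; lra); assert (0 < e^2) by (apply pow_lt; lra); lra|].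
  assert (0 <= d - e) by lra.
  assert (Hu3 : u^3 <= 8*e^3).
  { replace (8*e^3) with ((2*e)^3) by ring. apply pow_incr; lra. }
  assert (Hue : u*e^2 <= 2*e*e^2) by (apply Rmult_le_compat_r; nra).
  assert (Hq : u*(e^2+u^2) <= 10*e^3) by nra.
  assert (Hq2 : (d+e)*(u*(e^2+u^2)) <= (2*d)*(10*e^3)).
  { apply Rmult_le_compat; nra. }
  assert (Hq3 : d*e^3 <= e^2*d^2).
  { replace (d*e^3) with (e^2*(d*e)) by ring. replace (e^2*d^2) with (e^2*(d*d)) by ring.
    apply Rmult_le_compat_l; nra. }
  assert (Hq4 : (d + e) * (u * (e ^ 2 + u ^ 2)) <= 20 * (e^2*d^2)) by lra.
  replace ((d - e) * (d + e) * (u * (e ^ 2 + u ^ 2))) with ((d-e) * ((d + e) * (u * (e ^ 2 + u ^ 2)))) by ring.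
  replace (20 * (d - e) * (e ^ 2 * d ^ 2)) with ((d-e) * (20 * (e^2*d^2))) by ring.
  apply Rmult_le_compat_l; lra. Qed.

Lemma T6 e u d : 0 < u -> e <= -1/4 -> e <= d -> d <= -1/8 ->
  /(e^2+0^2) <= /(d^2+0^2) + 20*(d-e)/u * /(e^2+u^2).
Proof. intros Hu He Hd Hd2.
  assert (0 <= 20*(d-e)/u * /(e^2+u^2)).
  { apply Rmult_le_pos. apply Rmult_le_pos. lra. left; apply Rinv_0_lt_compat; lra.
    left; apply Rinv_0_lt_compat; nra. }
  assert (/(e^2+0^2) <= /(d^2+0^2)); [|lra].
  apply Rinv_le_contravar; nra. Qed.

Lemma T7b e d w L : 0 < w -> 1 <= L -> 0 < e -> e <= d ->
  2/(L*w)*(d-e) * /(d^2+w^2) <=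
  /(e^2+0^2) - /(d^2+0^2) + 8*(d-e) * /(d^2+0^2) + 2*(2/(L*w))*(d-e) * /(d^2+(L*w)^2).
Proof. intros Hw HL He Hd.
  assert (0 < L*w) by nra. assert (0 < d) by lra.
  assert (Q0 : 0 <= /(e^2+0^2) - /(d^2+0^2)).
  { assert (/(d^2+0^2) <= /(e^2+0^2)); [|lra]. apply Rinv_le_contravar; nra. }
  assert (Q1 : 0 <= 8*(d-e) * /(d^2+0^2)).
  { apply Rmult_le_pos. lra. left; apply Rinv_0_lt_compat; nra. }
  assert (Q2 : 0 <= 2*(2/(L*w))*(d-e) * /(d^2+(L*w)^2)).
  { apply Rmult_le_pos. apply Rmult_le_pos. apply Rmult_le_pos. lra. left; apply Rdiv_lt_0_compat; lra. lra.
    left; apply Rinv_0_lt_compat; nra. }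
  destruct (Rle_lt_dec d (L*w)).
  - assert (2/(L*w)*(d-e) * /(d^2+w^2) <= /(e^2+0^2) - /(d^2+0^2)); [|lra].
    replace (/(e^2+0^2) - /(d^2+0^2)) with ((d-e)*(d+e)/(e^2*d^2)) by (field; lra).
    replace (2/(L*w)*(d-e) * /(d^2+w^2)) with (2*(d-e)/((L*w)*(d^2+w^2))) by (field; nra).
    assert (0 < e^2) by (apply pow_lt; lra). assert (0 < d^2) by (apply pow_lt; lra).
    assert (0 < w^2) by (apply pow_lt; lra).
    apply div_le_div; [apply Rmult_lt_0_compat; lra | apply Rmult_lt_0_compat; lra |].
    assert (0 <= d-e) by lra.
    assert (Hd3 : d^3 <= L*w*(d^2+w^2)).
    { replace (d^3) with (d*d^2) by ring. apply Rle_trans with (L*w*d^2).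
      apply Rmult_le_compat_r; lra. apply Rmult_le_compat_l; lra. }
    assert (He2 : 2*(e^2*d^2) <= (d+e)*d^3).
    { replace ((d+e)*d^3) with (d^2*(d*d + e*d)) by ring. replace (2*(e^2*d^2)) with (d^2*(2*e*e)) by ring.
      apply Rmult_le_compat_l. lra. nra. }
    assert (He3 : (d+e)*d^3 <= (d+e)*(L*w*(d^2+w^2))) by (apply Rmult_le_compat_l; lra).
    replace (2 * (d - e) * (e ^ 2 * d ^ 2)) with ((d-e)*(2*(e^2*d^2))) by ring.
    replace ((d - e) * (d + e) * (L * w * (d ^ 2 + w ^ 2))) with ((d-e)*((d+e)*(L*w*(d^2+w^2)))) by ring.
    apply Rmult_le_compat_l; lra.
  - assert (2/(L*w)*(d-e) * /(d^2+w^2) <= 2*(2/(L*w))*(d-e) * /(d^2+(L*w)^2)); [|lra].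
    replace (2/(L*w)*(d-e) * /(d^2+w^2)) with (2*(d-e)/((L*w)*(d^2+w^2))) by (field; nra).
    replace (2*(2/(L*w))*(d-e) * /(d^2+(L*w)^2)) with (4*(d-e)/((L*w)*(d^2+(L*w)^2))) by (field; nra).
    assert (0 < d^2) by (apply pow_lt; lra). assert (0 < w^2) by (apply pow_lt; lra).
    assert (0 < (L*w)^2) by (apply pow_lt; lra).
    apply div_le_div; [apply Rmult_lt_0_compat; lra | apply Rmult_lt_0_compat; lra |].
    assert (0 <= d-e) by lra.
    assert ((L*w)^2 <= d^2) by (apply pow_incr; lra).
    assert (Hk : d^2 + (L*w)^2 <= 2*(d^2+w^2)) by lra.
    replace (2 * (d - e) * (L * w * (d ^ 2 + (L * w) ^ 2))) with ((d-e)*(L*w)*(2*(d ^ 2 + (L * w) ^ 2))) by ring.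
    replace (4 * (d - e) * (L * w * (d ^ 2 + w ^ 2))) with ((d-e)*(L*w)*(4*(d^2+w^2))) by ring.
    apply Rmult_le_compat_l; [apply Rmult_le_pos; lra| lra]. Qed.

Lemma T7l e d w L : 0 < w -> 1 <= L -> L*w <= 1/4 -> d <= -1/4 -> e <= d ->
  2/(L*w)*(d-e) * /(d^2+w^2) <=
  /(e^2+0^2) - /(d^2+0^2) + 8*(d-e) * /(d^2+0^2) + 2*(2/(L*w))*(d-e) * /(d^2+(L*w)^2).
Proof. intros Hw HL HLw Hd He.
  assert (0 < L*w) by nra.
  assert (Q0 : 0 <= /(e^2+0^2) - /(d^2+0^2) + 8*(d-e) * /(d^2+0^2)).
  { replace (/(e^2+0^2) - /(d^2+0^2) + 8*(d-e) * /(d^2+0^2)) with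
      ((d-e)*(8*e^2 - (-e-d)) / (e^2*d^2)) by (field; nra).
    assert (0 <= (-e)*(-(4*e+1))) by (apply Rmult_le_pos; lra).
    assert (0 < e^2) by nra. assert (0 < d^2) by nra.
    apply Rmult_le_pos. apply Rmult_le_pos. lra. nra. left; apply Rinv_0_lt_compat; apply Rmult_lt_0_compat; lra. }
  assert (2/(L*w)*(d-e) * /(d^2+w^2) <= 2*(2/(L*w))*(d-e) * /(d^2+(L*w)^2)); [|lra].
  replace (2/(L*w)*(d-e) * /(d^2+w^2)) with (2*(d-e)/((L*w)*(d^2+w^2))) by (field; nra).
  replace (2*(2/(L*w))*(d-e) * /(d^2+(L*w)^2)) with (4*(d-e)/((L*w)*(d^2+(L*w)^2))) by (field; nra).
  assert (0 < d^2) by nra. assert (0 < w^2) by (apply pow_lt; lra).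
  assert (0 < (L*w)^2) by (apply pow_lt; lra).
  apply div_le_div; [apply Rmult_lt_0_compat; lra | apply Rmult_lt_0_compat; lra |].
  assert (0 <= d-e) by lra.
  assert ((L*w)^2 <= d^2) by nra.
  assert (Hk : d^2 + (L*w)^2 <= 2*(d^2+w^2)) by lra.
  replace (2 * (d - e) * (L * w * (d ^ 2 + (L * w) ^ 2))) with ((d-e)*(L*w)*(2*(d ^ 2 + (L * w) ^ 2))) by ring.
  replace (4 * (d - e) * (L * w * (d ^ 2 + w ^ 2))) with ((d-e)*(L*w)*(4*(d^2+w^2))) by ring.
  apply Rmult_le_compat_l; [apply Rmult_le_pos; lra| lra]. Qed.

Definition Setup N V K t s : Prop :=
  (0<N)%nat /\ 1 <= K /\ 0 < t /\ t <= /(100*K^4) /\ 0 < s /\ s <= t^2/(64*K^2) /\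
  (forall x y, -1 <= x <= 0 -> s <= y <= 10 ->
     1 <= K^2 * (-x + y) * (Gf N V x y)^2 /\ (Gf N V x y)^2 * (-x+y) <= K^2) /\
  (forall x y, 0 <= x <= 1 -> sqrt s * sqrt x + s <= y <= 10 ->
     x + y <= K^2*y^2*(Gf N V x y)^2 /\ y^2*(Gf N V x y)^2 <= K^2*(x+y)) /\
  (forall i, (i<N)%nat -> V i < -1 \/ -s < V i).

Lemma params N V K t s : Setup N V K t s ->
  1 <= K /\ 0 < t /\ 0 < s /\ t * K^4 <= /100 /\ 64*K^2*s <= t^2 /\ t <= /100 /\ K <= K^4 /\ s <= /1000.
Proof. intros (HN & HK & Ht & Ht2 & Hs & Hs2 & _).
  assert (K <= K^4). { assert (1 <= K^3) by (apply pow_R1_Rle; auto). nra. }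
  assert (1 <= K^4) by lra.
  assert (t * K^4 <= /100).
  { apply Rmult_le_reg_r with (/K^4). apply Rinv_0_lt_compat; lra.
    rewrite Rmult_assoc, Rinv_r, Rmult_1_r by lra. rewrite <- Rinv_mult. auto. }
  assert (0 < K^2) by nra.
  assert (64*K^2*s <= t^2).
  { unfold Rdiv in Hs2. apply Rmult_le_compat_l with (r := 64*K^2) in Hs2; [|lra].
    rewrite Hs2. right. field. lra. }
  assert (t <= /100) by nra.
  assert (t^2 <= /10000) by nra.
  repeat split; try lra. nra. Qed.

Lemma loc N V K t s x i : Setup N V K t s -> -3/4 <= x -> 2*s <= -x -> (i<N)%nat ->
  -x/2 <= V i - x \/ V i - x <= -1/4.
Proof. intros HS Hx1 Hx2 Hi. destruct HS as (_&_&_&_&_&_&_&_&R3).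
  destruct (R3 i Hi); [right|left]; lra. Qed.

Lemma P_lemma N V K t s x y : Setup N V K t s -> 0 <= x <= 3/4 ->
  0 <= y <= sqrt s * sqrt x + s ->
  (forall i, (i<N)%nat -> 0 < (V i - x)^2 + y^2) -> 1 < t * Gf N V x y.
Proof. intros HS Hx Hy HQ. pose proof (params _ _ _ _ _ HS) as (HK & Ht & Hs & HtK & Hst & Ht1 & HK4 & Hs1).
  destruct HS as (HN&_&_&_&_&_&R1&R2&R3).
  set (p := sqrt s). set (q := sqrt x). set (y0 := p*q + s).
  assert (Hp : p*p = s) by (apply sqrt_sqrt; lra). assert (Hq : q*q = x) by (apply sqrt_sqrt; lra).
  assert (0 <= p) by apply sqrt_pos. assert (0 <= q) by apply sqrt_pos.
  assert (s <= 1) by nra. assert (p <= 1) by nra. assert (q <= 1) by nra.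
  assert (Hy0 : s <= y0 <= 10) by (unfold y0; nra).
  destruct (R2 x y0) as [HR2 _]. lra. unfold y0, p, q in *; lra.
  assert (Hy02 : y0^2 <= 2*s*(x+y0)).
  { unfold y0. replace ((p*q+s)^2) with (s*(q+p)^2) by (rewrite <- Hp; ring). nra. }
  set (G0 := Gf N V x y0) in *.
  assert (HG0 : 0 <= G0) by apply Gf_nonneg.
  assert (1 <= 2*K^2*s*G0^2).
  { assert (x + y0 <= K^2*(2*s*(x+y0))*G0^2).
    { apply Rle_trans with (K^2*y0^2*G0^2); auto; fold G0 in HR2; auto. apply Rmult_le_compat_r. nra. apply Rmult_le_compat_l; nra. }
    assert (0 < x + y0) by lra. nra. }
  assert (16 <= (t*G0)^2).
  { assert (0 <= G0^2) by nra. nra. }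
  assert (4 <= t*G0). { assert (0 <= t*G0) by (apply Rmult_le_pos; lra). destruct (Rle_lt_dec 4 (t*G0)); auto. nra. }
  assert (G0 <= Gf N V x y) by (apply Gf_mono; auto; lra).
  nra. Qed.

Lemma U_lemma N V K t s x : Setup N V K t s -> -3/4 <= x -> 4*s <= -x ->
  (-x) * (Gf N V x 0)^2 <= 4*K^2.
Proof. intros HS Hx1 Hx2. pose proof (params _ _ _ _ _ HS) as (HK & Ht & Hs & HtK & Hst & Ht1 & HK4 & Hs1).
  pose proof HS as (HN&_&_&_&_&_&R1&R2&R3).
  set (m := -x/4).
  assert (HG : Gf N V x 0 <= 2 * Gf N V x m).
  { unfold Gf. rewrite <- avg_scal. apply avg_le; auto. intros i Hi. apply T1. unfold m; lra.
    destruct (loc _ _ _ _ _ x i HS Hx1 ltac:(lra) Hi); unfold m; nra. }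
  destruct (R1 x m) as [_ H2]. lra. unfold m; lra.
  pose proof (Gf_nonneg N V x 0). pose proof (Gf_nonneg N V x m).
  assert ((Gf N V x 0)^2 <= 4 * (Gf N V x m)^2) by nra.
  assert (0 <= (Gf N V x m)^2) by nra.
  unfold m in *. nra. Qed.

Lemma am_lemma N V K t s am : Setup N V K t s -> -3/4 <= am <= 3/4 ->
  (forall i, (i<N)%nat -> V i <> am) -> t * Gf N V am 0 = 1 ->
  t^2/(2*K^2) <= -am <= 4*K^2*t^2.
Proof. intros HS Ham Hne Heq. pose proof (params _ _ _ _ _ HS) as (HK & Ht & Hs & HtK & Hst & Ht1 & HK4 & Hs1).
  pose proof HS as (HN&_&_&_&_&_&R1&R2&R3).
  assert (HQ : forall i, (i<N)%nat -> 0 < (V i - am)^2 + 0^2).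
  { intros i Hi. pose proof (Hne i Hi). assert (V i - am <> 0) by lra. nra. }
  assert (Hneg : am < 0).
  { destruct (Rlt_le_dec am 0); auto. exfalso.
    assert (1 < t * Gf N V am 0). { apply (P_lemma N V K t s am 0 HS); [lra | | exact HQ].
    assert (0 <= sqrt s * sqrt am) by (apply Rmult_le_pos; apply sqrt_pos). lra. } lra. }
  assert (HGs : Gf N V am s <= Gf N V am 0) by (apply Gf_mono; auto; lra).
  pose proof (Gf_nonneg N V am s).
  destruct (R1 am s) as [H1 _]. lra. lra.
  assert (HK2 : 0 < K^2) by nra.
  assert (t^2 <= K^2*(-am+s)).
  { assert (t*Gf N V am s <= 1) by (rewrite <- Heq; apply Rmult_le_compat_l; lra).
    assert (0 <= t*Gf N V am s) by (apply Rmult_le_pos; lra).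
    assert ((t*Gf N V am s)^2 <= 1) by nra.
    assert (t^2 * 1 <= t^2 * (K^2 * (-am + s) * Gf N V am s ^ 2)) by (apply Rmult_le_compat_l; nra).
    assert (0 <= K^2*(-am+s)) by nra.
    replace (t ^ 2 * (K ^ 2 * (- am + s) * Gf N V am s ^ 2)) with ((K^2*(-am+s)) * (t*Gf N V am s)^2) in H3 by ring.
    nra. }
  assert (Hlow : t^2/(2*K^2) <= -am).
  { apply Rmult_le_reg_r with (2*K^2). lra. unfold Rdiv. rewrite Rmult_assoc, Rinv_l, Rmult_1_r by lra. nra. }
  split; auto.
  assert (H4s : 4*s <= -am).
  { assert (t^2/(2*K^2) * (2*K^2) = t^2) by (field; lra). nra. }
  pose proof (U_lemma _ _ _ _ _ am HS ltac:(lra) H4s).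
  assert (-am = t^2 * ((-am) * (Gf N V am 0)^2)) by (replace (t^2 * (- am * Gf N V am 0 ^ 2)) with (-am * (t*Gf N V am 0)^2) by ring; rewrite Heq; ring).
  nra. Qed.

Definition Lhyp N V t a b := 0 <= b /\ (forall i, (i<N)%nat -> 0 < (V i - a)^2 + b^2) /\
  t * Gf N V a b <= 1 /\ b = t * b * Gf N V a b.

Lemma tG1 N V t a b : Lhyp N V t a b -> 0 < b -> t * Gf N V a b = 1.
Proof. intros (_&_&_&H) Hb. apply (Rmult_eq_reg_l b). rewrite Rmult_1_r. lra. lra. Qed.

Lemma Qpos (V : nat -> R) a y (i : nat) : 0 < y -> 0 < (V i - a)^2 + y^2.
Proof. intros. assert (0 < y^2) by (apply pow_lt; lra). assert (0 <= (V i - a)^2) by apply pow2_ge_0. lra. Qed.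

Lemma b10 N V K t s a b : Setup N V K t s -> -1 <= a <= 3/4 -> Lhyp N V t a b -> 0 < b -> b <= 10.
Proof. intros HS Ha HL Hb. pose proof (params _ _ _ _ _ HS) as (HK & Ht & Hs & HtK & Hst & Ht1 & HK4 & Hs1).
  pose proof HS as (HN&_&_&_&_&_&R1&R2&R3). pose proof (tG1 _ _ _ _ _ HL Hb) as H1.
  destruct (Rle_lt_dec b 10); auto. exfalso.
  assert (Gf N V a b <= Gf N V a 10) by (apply Gf_mono; auto; try lra; intros; apply Qpos; lra).
  pose proof (Gf_nonneg N V a 10). pose proof (Gf_nonneg N V a b).
  assert (HtK2 : t^2*K^2 <= /10000).
  { assert (0 <= t*K) by nra. assert (t*K <= /100) by nra. nra. }
  assert (HG10 : (Gf N V a 10)^2 <= K^2 / 9).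
  { destruct (Rle_lt_dec a 0).
    - destruct (R1 a 10) as [_ HR]; [lra|lra|].
      assert (0 <= Gf N V a 10 ^ 2) by nra. unfold Rdiv. nra.
    - destruct (R2 a 10) as [_ HR]; [lra| |].
      { assert (sqrt s <= 1). { rewrite <- sqrt_1. apply sqrt_le_1_alt. lra. }
        assert (sqrt a <= 1). { rewrite <- sqrt_1. apply sqrt_le_1_alt. lra. }
        pose proof (sqrt_pos s). pose proof (sqrt_pos a). split; try lra. nra. }
      assert (0 <= Gf N V a 10 ^ 2) by nra. unfold Rdiv. nra. }
  assert (1 <= t * Gf N V a 10) by (rewrite <- H1; apply Rmult_le_compat_l; lra).
  assert (1 <= (t * Gf N V a 10)^2) by nra.
  assert ((t * Gf N V a 10)^2 <= t^2 * (K^2/9)) by (rewrite Rpow_mult_distr; apply Rmult_le_compat_l; nra).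
  unfold Rdiv in *. nra. Qed.

Lemma regionI N V K t s a b w : Setup N V K t s -> 0 <= a <= 3/4 -> Lhyp N V t a b ->
  t^2/(2*K^2) <= w <= 4*K^2*t^2 ->
  b^2 <= 8*K^6*t^2*(a+w) /\ t^2*(a+w) <= 8*K^6*b^2.
Proof. intros HS Ha HL Hw. pose proof (params _ _ _ _ _ HS) as (HK & Ht & Hs & HtK & Hst & Ht1 & HK4 & Hs1).
  pose proof HS as (HN&_&_&_&_&_&R1&R2&R3). pose proof HL as (Hb0 & HQ & HtG & Hbe).
  assert (Hy0 : sqrt s * sqrt a + s < b).
  { destruct (Rlt_le_dec (sqrt s * sqrt a + s) b); auto. exfalso.
    assert (1 < t * Gf N V a b) by (apply (P_lemma N V K t s a b HS); auto; lra). lra. }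
  assert (Hb : 0 < b). { assert (0 <= sqrt s * sqrt a) by (apply Rmult_le_pos; apply sqrt_pos). lra. }
  pose proof (tG1 _ _ _ _ _ HL Hb) as H1.
  pose proof (b10 _ _ _ _ _ a b HS ltac:(lra) HL Hb) as H10.
  destruct (R2 a b) as [H2 H3]; [lra|lra|].
  set (G := Gf N V a b) in *.
  assert (E1 : t^2*(a+b) <= K^2*b^2).
  { replace (K^2*b^2) with (K^2*b^2*(t*G)^2) by (rewrite H1; ring).
    replace (K ^ 2 * b ^ 2 * (t * G) ^ 2) with (t^2 * (K^2*b^2*G^2)) by ring.
    apply Rmult_le_compat_l; nra. }
  assert (E2 : b^2 <= K^2*t^2*(a+b)).
  { replace (b^2) with (b^2*(t*G)^2) by (rewrite H1; ring).
    replace (b ^ 2 * (t * G) ^ 2) with (t^2 * (b^2*G^2)) by ring.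
    replace (K^2*t^2*(a+b)) with (t^2 * (K^2*(a+b))) by ring.
    apply Rmult_le_compat_l; nra. }
  assert (HK2 : 1 <= K^2) by nra.
  assert (HK6 : K^2 <= K^6). { assert (1 <= K^4) by nra. nra. }
  assert (HK64 : K^4 <= K^6) by nra.
  assert (Hw2 : t^2 <= 2*K^2*w).
  { destruct Hw as [Hw _]. apply Rmult_le_compat_l with (r := 2*K^2) in Hw; [|nra].
    replace (2 * K ^ 2 * (t ^ 2 / (2 * K ^ 2))) with (t^2) in Hw by (field; lra). lra. }
  split.
  - destruct (Rle_lt_dec b (2*K^2*t^2)).
    + assert (b^2 <= 4*K^4*t^4). { replace (4*K^4*t^4) with ((2*K^2*t^2)^2) by ring. apply pow_incr; lra. }
      assert (t^4 <= t^2 * (2*K^2*(a+w))).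
      { replace (t^4) with (t^2*t^2) by ring. apply Rmult_le_compat_l; nra. }
      assert (4*K^4*t^4 <= 4*K^4*(t^2 * (2*K^2*(a+w)))) by (apply Rmult_le_compat_l; nra).
      replace (4 * K ^ 4 * (t ^ 2 * (2 * K ^ 2 * (a + w)))) with (8*K^6*t^2*(a+w)) in H0 by ring. lra.
    + assert (K^2*t^2*b <= b^2/2).
      { replace (b^2/2) with (b*(b/2)) by field. replace (K^2*t^2*b) with (b*(K^2*t^2)) by ring.
        apply Rmult_le_compat_l; lra. }
      assert (b^2 <= 2*K^2*t^2*a) by nra.
      assert (0 <= t^2*(a+w)) by nra.
      assert (2*K^2*t^2*a <= 8*K^6*t^2*(a+w)).
      { assert (0 <= t^2*a) by nra. assert (0 <= t^2*w) by nra.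
        assert (2*K^2*(t^2*a) <= 8*K^6*(t^2*a)) by (apply Rmult_le_compat_r; nra).
        assert (0 <= 8*K^6*(t^2*w)) by nra. nra. }
      lra.
  - assert (Hbt : t^2 <= K^2*b).
    { assert (t^2 * b <= K^2*b*b) by nra. apply Rmult_le_reg_r with b; auto. }
    assert (Hw3 : w <= 4*K^2*(K^2*b)) by nra.
    assert (t^2*w <= 4*K^6*b^2).
    { apply Rle_trans with (t^2*(4*K^2*(K^2*b))). apply Rmult_le_compat_l; nra.
      assert (t^2*(4*K^2*(K^2*b)) = 4*K^4*(t^2*b)) by ring.
      assert (t^2*b <= K^2*b*b) by (apply Rmult_le_compat_r; lra).
      nra. }
    assert (t^2*a <= K^2*b^2) by nra.
    assert (K^2*b^2 <= 4*K^6*b^2) by (apply Rmult_le_compat_r; nra).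
    nra.
Qed.

Lemma regionII N V K t s a b w : Setup N V K t s -> -(t^2/(4*K^2)) <= a <= 0 -> Lhyp N V t a b ->
  t^2/(2*K^2) <= w <= 4*K^2*t^2 ->
  b^2 <= 8*K^6*t^2*(a+w) /\ t^2*(a+w) <= 8*K^6*b^2.
Proof. intros HS Ha HL Hw. pose proof (params _ _ _ _ _ HS) as (HK & Ht & Hs & HtK & Hst & Ht1 & HK4 & Hs1).
  pose proof HS as (HN&_&_&_&_&_&R1&R2&R3). pose proof HL as (Hb0 & HQ & HtG & Hbe).
  assert (HK2 : 1 <= K^2) by nra.
  assert (HK6 : K^2 <= K^6). { assert (1 <= K^4) by nra. nra. }
  assert (HK64 : K^4 <= K^6) by nra.
  assert (Ha4 : K^2*(-a) <= t^2/4).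
  { destruct Ha as [Ha _]. apply Rmult_le_compat_l with (r := K^2) in Ha; [|nra].
    replace (K^2 * - (t^2/(4*K^2))) with (-(t^2/4)) in Ha by (field; lra). lra. }
  assert (Hw2 : t^2 <= 2*K^2*w).
  { destruct Hw as [Hw _]. apply Rmult_le_compat_l with (r := 2*K^2) in Hw; [|nra].
    replace (2 * K ^ 2 * (t ^ 2 / (2 * K ^ 2))) with (t^2) in Hw by (field; lra). lra. }
  assert (Ha1 : -1 <= a) by nra.
  assert (Hbs : s < b).
  { destruct (Rlt_le_dec s b); auto. exfalso.
    assert (Gf N V a s <= Gf N V a b) by (apply Gf_mono; auto; lra).
    destruct (R1 a s) as [HR _]; [lra|lra|].
    pose proof (Gf_nonneg N V a s).
    assert (K^2*(-a+s) <= t^2/2) by nra.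
    assert (1 <= t^2/2 * Gf N V a s ^2) by (apply Rle_trans with (K ^ 2 * (- a + s) * Gf N V a s ^ 2); auto; apply Rmult_le_compat_r; nra).
    assert (t * Gf N V a s <= 1) by (apply Rle_trans with (t * Gf N V a b); auto; apply Rmult_le_compat_l; lra).
    assert (0 <= t * Gf N V a s) by (apply Rmult_le_pos; lra).
    assert ((t * Gf N V a s)^2 <= 1) by nra.
    replace (t ^ 2 / 2 * Gf N V a s ^ 2) with ((t * Gf N V a s)^2 / 2) in H3 by (field).
    lra. }
  assert (Hb : 0 < b) by lra.
  pose proof (tG1 _ _ _ _ _ HL Hb) as H1.
  pose proof (b10 _ _ _ _ _ a b HS ltac:(lra) HL Hb) as H10.
  destruct (R1 a b) as [H2 H3]; [lra|lra|].
  set (G := Gf N V a b) in *.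
  assert (E1 : t^2 <= K^2*(-a+b)).
  { replace (K^2*(-a+b)) with (K^2*(-a+b)*(t*G)^2) by (rewrite H1; ring).
    replace (K ^ 2 * (-a+b) * (t * G) ^ 2) with (t^2 * (K^2*(-a+b)*G^2)) by ring.
    replace (t^2) with (t^2*1) at 1 by ring.
    apply Rmult_le_compat_l; nra. }
  assert (E2 : -a + b <= K^2*t^2).
  { replace (-a+b) with ((-a+b)*(t*G)^2) by (rewrite H1; ring).
    replace ((-a+b) * (t * G) ^ 2) with (t^2 * (G^2*(-a+b))) by ring.
    replace (K^2*t^2) with (t^2 * K^2) by ring.
    apply Rmult_le_compat_l; nra. }
  assert (Hbu : b <= K^2*t^2) by lra.
  assert (Hbl : 3*t^2 <= 4*K^2*b) by nra.
  assert (Hd1 : t^2 <= 4*K^2*(a+w)) by nra.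
  assert (Hd2 : a + w <= 4*K^2*t^2) by lra.
  split.
  - assert (b^2 <= K^4*t^4). { replace (K^4*t^4) with ((K^2*t^2)^2) by ring. apply pow_incr; lra. }
    assert (t^4 <= t^2*(4*K^2*(a+w))). { replace (t^4) with (t^2*t^2) by ring. apply Rmult_le_compat_l; nra. }
    assert (K^4*t^4 <= K^4*(t^2*(4*K^2*(a+w)))) by (apply Rmult_le_compat_l; nra).
    assert (K^4 * (t ^ 2 * (4 * K ^ 2 * (a + w))) = 4*K^6*t^2*(a+w)) by ring.
    assert (0 <= K^6*t^2*(a+w)). { apply Rmult_le_pos. nra. nra. }
    lra.
  - assert (t^2*(a+w) <= 4*K^2*t^4). { replace (4*K^2*t^4) with (t^2*(4*K^2*t^2)) by ring. apply Rmult_le_compat_l; nra. }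
    assert (9*t^4 <= 16*K^4*b^2). { replace (9*t^4) with ((3*t^2)^2) by ring. replace (16*K^4*b^2) with ((4*K^2*b)^2) by ring. apply pow_incr; nra. }
    assert (4*K^2*t^4 <= 4*K^2*(16*K^4*b^2/9)) by (apply Rmult_le_compat_l; nra).
    assert (4*K^2*(16*K^4*b^2/9) = 64/9*K^6*b^2) by field.
    assert (0 <= K^6*b^2) by nra.
    lra.
Qed.

Lemma avg_le_lin3 N f g h k c1 c2 : (0<N)%nat ->
  (forall i, (i<N)%nat -> f i <= g i + c1 * h i + c2 * k i) ->
  avg N f <= avg N g + c1 * avg N h + c2 * avg N k.
Proof. intros HN H. rewrite <- avg_lin, <- avg_lin. apply avg_le; auto. Qed.

Lemma avg_le_lin2 N f g h c1 c2 : (0<N)%nat ->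
  (forall i, (i<N)%nat -> f i <= c1 * g i + c2 * h i) ->
  avg N f <= c1 * avg N g + c2 * avg N h.
Proof. intros HN H. rewrite <- avg_scal. rewrite <- (avg_lin N (fun i => c1 * g i)). apply avg_le; auto. Qed.

Lemma near_lemma N V K t s x : Setup N V K t s -> -1 <= x <= 0 -> s <= -x -> 32*K^4*(-x) <= 10 ->
  1 <= 2*K^2*(-x)*(Gf N V x (-x))^2 /\ (Gf N V x (-x))^2*(2*(-x)) <= K^2 /\
  4 * Gf N V x (32*K^4*(-x)) <= Gf N V x (-x).
Proof. intros HS Hx Hsx HL. pose proof (params _ _ _ _ _ HS) as (HK & Ht & Hs & HtK & Hst & Ht1 & HK4 & Hs1).
  pose proof HS as (HN&_&_&_&_&_&R1&R2&R3).
  assert (1 <= K^4) by lra.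
  destruct (R1 x (-x)) as [A1 A2]; [lra| lra |].
  destruct (R1 x (32*K^4*(-x))) as [_ B2]; [lra| nra |].
  set (Gu := Gf N V x (-x)) in *. set (GL := Gf N V x (32*K^4*(-x))) in *.
  pose proof (Gf_nonneg N V x (-x)). pose proof (Gf_nonneg N V x (32*K^4*(-x))).
  fold Gu GL in H0, H1.
  split. replace (2 * K ^ 2 * - x * Gu ^ 2) with (K ^ 2 * (- x + - x) * Gu ^ 2) by ring. auto.
  split. replace (Gu ^ 2 * (2 * - x)) with (Gu ^ 2 * (- x + - x)) by ring. auto.
  assert (HB : GL^2 * (32*K^4*(-x)) <= K^2).
  { apply Rle_trans with (GL ^ 2 * (- x + 32 * K ^ 4 * - x)); auto. apply Rmult_le_compat_l; nra. }
  assert (0 < -x) by lra. assert (0 < K^2) by nra.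
  assert (16*GL^2 <= Gu^2).
  { assert (16*GL^2 * (32*K^4*(-x)) <= 16*K^2) by nra.
    assert (16*K^2 * (2*K^2*(-x)*Gu^2) >= 16*K^2) by nra.
    assert (16*GL^2 * (32*K^4*(-x)) <= Gu^2 * (32*K^4*(-x))) by nra.
    apply Rmult_le_reg_r with (32*K^4*(-x)). nra. lra. }
  nra. Qed.

Lemma regionIII N V K t s am a b : Setup N V K t s -> -3/4 <= am ->
  (forall i, (i<N)%nat -> V i <> am) -> t * Gf N V am 0 = 1 ->
  t^2/(2*K^2) <= -am <= 4*K^2*t^2 -> am <= a <= -(t^2/(4*K^2)) -> Lhyp N V t a b ->
  b^2 <= 166400*K^10*t^2*(a-am) /\ t^2*(a-am) <= 327680*K^14*b^2.
Proof. intros HS Ham Hne Heq Hw Ha HL.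
  pose proof (params _ _ _ _ _ HS) as (HK & Ht & Hs & HtK & Hst & Ht1 & HK4 & Hs1).
  pose proof HS as (HN&_&_&_&_&_&R1&R2&R3). pose proof HL as (Hb0 & HQ & HtG & Hbe).
  set (u := -a). set (w := -am). set (L := 32*K^4). set (dl := a - am).
  assert (Hud : u = -a) by reflexivity. assert (Hwd : w = -am) by reflexivity.
  assert (Hdld : dl = a - am) by reflexivity. assert (HLd : L = 32*K^4) by reflexivity.
  assert (HK2 : 1 <= K^2) by nra. assert (HK40 : 1 <= K^4) by lra.
  assert (HK2p : 0 < K^2) by lra.
  assert (Hu1 : t^2 <= 4*K^2*u).
  { destruct Ha as [_ Ha]. apply Rmult_le_compat_l with (r := 4*K^2) in Ha; [|nra].
    replace (4 * K ^ 2 * - (t ^ 2 / (4 * K ^ 2))) with (-t^2) in Ha by (field; repeat split; lra). unfold u. lra. }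
  assert (Hw1 : t^2 <= 2*K^2*w).
  { destruct Hw as [Hw _]. apply Rmult_le_compat_l with (r := 2*K^2) in Hw; [|nra].
    replace (2 * K ^ 2 * (t ^ 2 / (2 * K ^ 2))) with (t^2) in Hw by (field; repeat split; lra). unfold w. lra. }
  assert (Hw2 : w <= 4*K^2*t^2) by (unfold w; lra).
  assert (Huw : u <= w) by (unfold u, w; lra).
  assert (Hdl : dl = w - u) by (unfold dl, w, u; ring).
  assert (Hdl0 : 0 <= dl) by (unfold dl; lra).
  assert (Hu0 : 0 < u) by nra.
  assert (Hus : 4*s <= u) by nra.
  assert (HX : t^2*K^8 <= /10000).
  { assert (0 <= t*K^4) by nra. replace (t^2*K^8) with ((t*K^4)^2) by ring.
    replace (/10000) with ((/100)^2) by field. apply pow_incr; lra. }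
  assert (HLw : L*w <= /50).
  { unfold L. assert (K^6 <= K^8) by (assert (K^2 <= K^4) by nra; nra).
    assert (32*K^4*w <= 32*K^4*(4*K^2*t^2)) by (apply Rmult_le_compat_l; nra).
    assert (t^2*K^6 <= t^2*K^8) by (apply Rmult_le_compat_l; nra).
    assert (32*K^4*(4*K^2*t^2) = 128*(t^2*K^6)) by ring. lra. }
  assert (HL1 : 1 <= L) by (unfold L; lra).
  assert (HLu : L*u <= /50) by nra.
  assert (Hw34 : w <= /50) by nra.
  assert (La : forall i, (i<N)%nat -> u/2 <= V i - a \/ V i - a <= -1/4).
  { intros i Hi. destruct (loc N V K t s a i HS ltac:(unfold u in *; lra) ltac:(unfold u in *; lra) Hi); [left|right]; unfold u; lra. }
  assert (Lm : forall i, (i<N)%nat -> w/2 <= V i - am \/ V i - am <= -1/4).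
  { intros i Hi. destruct (loc N V K t s am i HS ltac:(lra) ltac:(unfold w in *; lra) Hi); [left|right]; unfold w; lra. }
  destruct (near_lemma N V K t s a HS ltac:(unfold u in *; lra) ltac:(fold u; lra) ltac:(fold u L; lra)) as (Na1 & Na2 & Na3).
  destruct (near_lemma N V K t s am HS ltac:(unfold w in *; lra) ltac:(fold w; lra) ltac:(fold w L; lra)) as (Nm1 & Nm2 & Nm3).
  fold u L in Na1, Na2, Na3. fold w L in Nm1, Nm2, Nm3.
  set (Gu := Gf N V a u) in *. set (GLu := Gf N V a (L*u)) in *.
  set (Gw := Gf N V am w) in *. set (GLw := Gf N V am (L*w)) in *.
  set (G0a := Gf N V a 0). set (G0m := Gf N V am 0) in *. set (Gb := Gf N V a b) in *.
  pose proof (Gf_nonneg N V a u) as Gu0. pose proof (Gf_nonneg N V am w) as Gw0.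
  pose proof (Gf_nonneg N V a (L*u)) as GLu0. pose proof (Gf_nonneg N V am (L*w)) as GLw0.
  fold Gu GLu Gw GLw in Gu0, Gw0, GLu0, GLw0.
  assert (Gup : 0 < Gu).
  { destruct (Rle_lt_dec Gu 0); auto. assert (E : Gu = 0) by lra. rewrite E in Na1. lra. }
  assert (Gwp : 0 < Gw).
  { destruct (Rle_lt_dec Gw 0); auto. assert (E : Gw = 0) by lra. rewrite E in Nm1. lra. }
  assert (HG0m : G0m = /t) by (apply (Rmult_eq_reg_l t); [rewrite Heq; field|]; lra).
  set (S4 := avg N (fun i => /((V i - a)^2*((V i - a)^2+b^2)))).
  assert (Id : G0a = Gb + b^2 * S4).
  { unfold G0a, Gb, S4, Gf. rewrite <- avg_lin. apply avg_ext. intros i Hi. apply T2.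
    destruct (La i Hi); lra. }
  assert (S4up : S4 <= 20/u^2 * Gu).
  { unfold S4, Gu, Gf. rewrite <- avg_scal. apply avg_le; auto. intros i Hi. apply T4. lra.
    destruct (La i Hi); nra. }
  assert (S40 : 0 <= S4).
  { unfold S4. apply avg_nonneg. intros i Hi. left. apply Rinv_0_lt_compat.
    destruct (La i Hi); assert (0 < (V i - a)^2) by nra; assert (0 <= b^2) by nra; nra. }
  assert (DU : G0a <= G0m + (20*dl/u) * Gu).
  { unfold G0a, G0m, Gu, Gf. rewrite <- avg_lin. apply avg_le; auto. intros i Hi.
    replace (20*dl/u) with (20*((V i - am) - (V i - a))/u) by (unfold dl; field; lra).
    destruct (La i Hi).
    - apply T5; lra.
    - apply T6; try lra. }
  assert (DL : (2/(L*w)*dl) * Gw <= G0a + (8*dl - 1) * G0m + (2*(2/(L*w))*dl) * GLw).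
  { unfold Gw, G0a, G0m, GLw, Gf. rewrite <- avg_scal. apply avg_le_lin3; auto. intros i Hi.
    assert (Hde : (V i - am) - (V i - a) = dl) by (unfold dl; ring).
    assert (0 < L*w) by nra.
    assert (T : 2/(L*w)*((V i - am) - (V i - a)) * /((V i - am)^2+w^2) <=
      /((V i - a)^2+0^2) - /((V i - am)^2+0^2) + 8*((V i - am) - (V i - a)) * /((V i - am)^2+0^2)
      + 2*(2/(L*w))*((V i - am) - (V i - a)) * /((V i - am)^2+(L*w)^2)).
    { destruct (Lm i Hi).
      - apply T7b; try lra. destruct (La i Hi); lra.
      - apply T7l; try lra. }
    rewrite Hde in T. lra. }
  split.
  -
    destruct (Rle_lt_dec b 0) as [Hb|Hb].
    { assert (b = 0) by lra. subst b. assert (0 <= 166400*K^10*t^2*dl).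
      { apply Rmult_le_pos; auto. apply Rmult_le_pos; [|nra]. assert (0 <= K^10) by (apply pow_le; lra). lra. }
      fold dl. lra. }
    pose proof (tG1 _ _ _ _ _ HL Hb) as H1. fold Gb in H1.
    assert (HGb : Gb = G0m) by (rewrite HG0m; apply (Rmult_eq_reg_l t); [rewrite H1; field|]; lra).
    assert (Hbt : b <= K^2*t^2).
    { destruct (Rle_lt_dec b s). nra.
      pose proof (b10 _ _ _ _ _ a b HS ltac:(unfold u in *; lra) HL Hb) as H10.
      destruct (R1 a b) as [_ HR]; [unfold u in *; lra|lra|]. fold Gb in HR.
      assert (Gb^2 = /t^2) by (rewrite HGb, HG0m; field; lra).
      rewrite H in HR.
      apply Rmult_le_compat_l with (r := t^2) in HR; [|nra].
      replace (t^2 * (/t^2 * (-a+b))) with (-a+b) in HR by (field; repeat split; lra). unfold u in *; nra. }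
    set (P0 := (L^2 + 16*K^8)*u^2).
    assert (Hb2 : b^2 <= 16*K^8*u^2).
    { assert (b <= 4*K^4*u) by nra. replace (16*K^8*u^2) with ((4*K^4*u)^2) by ring. apply pow_incr; lra. }
    assert (S4lo : Gu <= P0 * S4 + 2 * GLu).
    { unfold Gu, S4, GLu, Gf. apply avg_le_lin2; auto. intros i Hi.
      apply T3; try lra. nra. destruct (La i Hi); lra. unfold P0. nra. }
    assert (Hmain : b^2 * Gu <= 2 * P0 * (20*dl/u) * Gu).
    { assert (b^2*S4 <= 20*dl/u*Gu) by nra.
      assert (0 <= P0) by (unfold P0; nra).
      assert (Gu/2 <= P0*S4) by nra.
      assert (b^2*(Gu/2) <= b^2*(P0*S4)) by (apply Rmult_le_compat_l; nra).
      assert (P0*(b^2*S4) <= P0*(20*dl/u*Gu)) by (apply Rmult_le_compat_l; nra).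
      nra. }
    assert (b^2 <= 2 * P0 * (20*dl/u)) by (apply Rmult_le_reg_r with Gu; auto).
    assert (2 * P0 * (20*dl/u) = 40*(L^2+16*K^8)*u*dl) by (unfold P0; field; lra).
    assert (40*(L^2+16*K^8)*u*dl = 41600*K^8*(u*dl)) by (unfold L; ring).
    assert (u*dl <= 4*K^2*t^2*dl) by (apply Rmult_le_compat_r; lra).
    assert (0 <= K^8) by (apply pow_le; lra).
    assert (41600*K^8*(u*dl) <= 41600*K^8*(4*K^2*t^2*dl)) by (apply Rmult_le_compat_l; lra).
    fold dl. nra.
  -
    assert (HGb : Gb <= G0m) by (rewrite HG0m; apply (Rmult_le_reg_l t); auto; rewrite Rinv_r; lra).
    assert (Hbs : G0a - G0m <= b^2*S4) by lra.
    assert (HtGw : 16*L*w <= t*Gw).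
    { assert (HA : 2*K^2*w*(256*L^2*w^2) <= t^2).
      { assert (w^3 <= 64*K^6*t^6). { replace (64*K^6*t^6) with ((4*K^2*t^2)^3) by ring. apply pow_incr; lra. }
        assert (2*K^2*w*(256*L^2*w^2) = 524288*K^10*w^3) by (unfold L; ring).
        assert (524288*K^10*w^3 <= 524288*K^10*(64*K^6*t^6)) by (apply Rmult_le_compat_l; [assert (0 <= K^10) by (apply pow_le; lra); lra| lra]).
        assert (524288*K^10*(64*K^6*t^6) = 33554432 * (t^2*K^8)^2 * t^2) by ring.
        assert ((t^2*K^8)^2 <= /100000000).
        { replace (/100000000) with ((/10000)^2) by field. apply pow_incr; split; [nra|lra]. }
        nra. }
      assert (t^2 <= (t*Gw)^2 * (2*K^2*w)) by nra.
      assert (256*L^2*w^2 <= (t*Gw)^2) by (apply Rmult_le_reg_l with (2*K^2*w); nra).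
      assert (0 <= t*Gw) by nra. assert (0 <= 16*L*w) by nra. nra. }
    assert (HDlo : dl*Gw/(2*L*w) <= G0a - G0m).
    { assert (GLw <= Gw/4) by lra.
      assert (0 < L*w) by nra.
      assert (2*(2/(L*w))*dl*GLw <= 2*(2/(L*w))*dl*(Gw/4)).
      { apply Rmult_le_compat_l; auto. apply Rmult_le_pos; [|lra]. apply Rmult_le_pos; [lra|]. left; apply Rdiv_lt_0_compat; lra. }
      assert (8*dl*G0m <= dl*Gw/(2*L*w)).
      { rewrite HG0m. assert (8/t <= Gw/(2*L*w)).
        { apply div_le_div; try nra. }
        replace (8*dl*/t) with (dl*(8/t)) by (unfold Rdiv; ring).
        replace (dl*Gw/(2*L*w)) with (dl*(Gw/(2*L*w))) by (field; repeat split; lra).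
        apply Rmult_le_compat_l; lra. }
      assert (2/(L*w)*dl*Gw = 2*(dl*Gw/(2*L*w)) + dl*Gw/(2*L*w)*2) by (field; repeat split; lra).
      assert (2*(2/(L*w))*dl*(Gw/4) = dl*Gw/(2*L*w)*2) by (field; repeat split; lra).
      nra. }
    assert (HGw : Gu <= 4*K^4*Gw).
    { assert (Gu^2 <= 16*K^8*Gw^2).
      { assert (Gu^2*(2*u) <= K^2) by lra.
        assert (K^2 <= 16*K^8*Gw^2*(2*u)).
        { assert (w <= 16*K^4*u) by nra.
          assert (0 <= K^4*Gw^2) by nra.
          assert (16*K^8*Gw^2*(2*u) = (K^4*Gw^2)*(2*(16*K^4*u))) by ring.
          assert ((K^4*Gw^2)*(2*w) <= (K^4*Gw^2)*(2*(16*K^4*u))) by (apply Rmult_le_compat_l; lra).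
          assert (K^4*Gw^2*(2*w) = K^2 * (2*K^2*w*Gw^2)) by ring.
          assert (K^2 * 1 <= K^2 * (2*K^2*w*Gw^2)) by (apply Rmult_le_compat_l; lra).
          lra. }
        apply Rmult_le_reg_r with (2*u); nra. }
      assert (0 <= 4*K^4*Gw) by nra. nra. }
    assert (Hc : dl*Gw/(2*L*w) <= b^2*(20/u^2*Gu)).
    { apply Rle_trans with (b^2*S4). lra. apply Rmult_le_compat_l; nra. }
    assert (Hc2 : dl*Gu/(8*K^4*L*w) <= dl*Gw/(2*L*w)).
    { replace (dl*Gu/(8*K^4*L*w)) with ((dl/(2*L*w)) * (Gu/(4*K^4))) by (field; repeat split; lra).
      replace (dl*Gw/(2*L*w)) with ((dl/(2*L*w)) * Gw) by (field; repeat split; lra).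
      apply Rmult_le_compat_l. unfold Rdiv; apply Rmult_le_pos; [lra| left; apply Rinv_0_lt_compat; nra].
      apply Rmult_le_reg_r with (4*K^4). nra. unfold Rdiv. rewrite Rmult_assoc, Rinv_l, Rmult_1_r; nra. }
    assert (Hc3 : dl*u^2 <= 160*K^4*L*w*b^2).
    { assert (dl*Gu/(8*K^4*L*w) <= b^2*(20/u^2*Gu)) by lra.
      assert (E1 : dl*Gu/(8*K^4*L*w) * (8*K^4*L*w*u^2) = dl*u^2*Gu) by (field; repeat split; lra).
      assert (E2 : b^2*(20/u^2*Gu) * (8*K^4*L*w*u^2) = 160*K^4*L*w*b^2*Gu) by (field; repeat split; lra).
      assert (dl*u^2*Gu <= 160*K^4*L*w*b^2*Gu).
      { rewrite <- E1, <- E2. apply Rmult_le_compat_r; auto. assert (0 < u^2) by nra. assert (0 < K^4) by lra.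
        assert (0 < L*w) by nra. assert (0 < K^4*(L*w)) by nra. nra. }
      apply Rmult_le_reg_r with Gu; auto. }
    assert (Hu2 : t^4 <= 16*K^4*u^2).
    { replace (t^4) with ((t^2)^2) by ring. replace (16*K^4*u^2) with ((4*K^2*u)^2) by ring. apply pow_incr; nra. }
    assert (dl*t^4 <= 16*K^4*(160*K^4*L*w*b^2)).
    { apply Rle_trans with (dl*(16*K^4*u^2)). apply Rmult_le_compat_l; lra. nra. }
    assert (16*K^4*(160*K^4*L*w*b^2) <= 16*K^4*(160*K^4*L*(4*K^2*t^2)*b^2)).
    { apply Rmult_le_compat_l; [nra|]. assert (0 <= 160*K^4*L*b^2) by nra. nra. }
    assert (16*K^4*(160*K^4*L*(4*K^2*t^2)*b^2) = t^2 * (327680*K^14*b^2)) by (unfold L; ring).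
    assert (t^2 * (t^2*dl) <= t^2 * (327680*K^14*b^2)) by nra.
    fold dl. apply Rmult_le_reg_l with (t^2). nra. lra.
Qed.

Lemma exp_le' x y : x <= y -> exp x <= exp y.
Proof. intros H. destruct (Rle_lt_or_eq_dec _ _ H). left; apply exp_increasing; auto. subst; lra. Qed.

Lemma final_sqrt b D t C : 0 <= b -> 0 <= D -> 1 <= C -> 0 < t ->
  b^2 <= C*(t^2*D) -> t^2*D <= C*b^2 ->
  / C * (t * sqrt D) <= b /\ b <= C * (t * sqrt D).
Proof. intros Hb HD HC Ht H1 H2.
  set (r := t * sqrt D). assert (Hr0 : 0 <= r) by (unfold r; apply Rmult_le_pos; [lra| apply sqrt_pos]).
  assert (Hr2 : r^2 = t^2*D) by (unfold r; rewrite Rpow_mult_distr; rewrite pow2_sqrt; auto).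
  split.
  - assert (r <= C*b).
    { assert (r^2 <= (C*b)^2).
      { rewrite Hr2. assert (C*b^2 <= C^2*b^2) by (apply Rmult_le_compat_r; nra). nra. }
      assert (0 <= C*b) by nra. nra. }
    apply Rmult_le_reg_l with C. lra. rewrite <- Rmult_assoc, Rinv_r, Rmult_1_l; lra.
  - assert (b^2 <= (C*r)^2).
    { rewrite Rpow_mult_distr, Hr2. assert (C*(t^2*D) <= C^2*(t^2*D)) by (apply Rmult_le_compat_r; nra). nra. }
    assert (0 <= C*r) by nra. nra.
Qed.

Lemma static N V K t s am a b : Setup N V K t s -> -3/4 <= am <= 3/4 ->
  (forall i, (i<N)%nat -> V i <> am) -> t * Gf N V am 0 = 1 ->
  am <= a <= 3/4 -> Lhyp N V t a b ->
  b^2 <= 1000000*K^14*(t^2*(a-am)) /\ t^2*(a-am) <= 1000000*K^14*b^2.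
Proof. intros HS Ham Hne Heq Ha HL.
  pose proof (params _ _ _ _ _ HS) as (HK & Ht & Hs & HtK & Hst & Ht1 & HK4 & Hs1).
  pose proof (am_lemma _ _ _ _ _ _ HS Ham Hne Heq) as Hw.
  assert (K6 : K^6 <= K^14) by (apply Rle_pow; auto; lia).
  assert (K10 : K^10 <= K^14) by (apply Rle_pow; auto; lia).
  assert (K14 : 1 <= K^14) by (apply pow_R1_Rle; auto).
  assert (D0 : 0 <= t^2*(a-am)) by (apply Rmult_le_pos; [nra|lra]).
  assert (B0 : 0 <= b^2) by nra.
  destruct (Rle_lt_dec 0 a).
  - destruct (regionI N V K t s a b (-am) HS ltac:(lra) HL Hw) as [H1 H2].
    replace (a + - am) with (a - am) in H1, H2 by ring. split; nra.
  - destruct (Rle_lt_dec (-(t^2/(4*K^2))) a).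
    + destruct (regionII N V K t s a b (-am) HS ltac:(lra) HL Hw) as [H1 H2].
      replace (a + - am) with (a - am) in H1, H2 by ring. split; nra.
    + destruct (regionIII N V K t s am a b HS ltac:(lra) Hne Heq Hw ltac:(lra) HL) as [H1 H2].
      split; nra.
Qed.

Lemma reg_conv N V s CV : (0 < N)%nat -> 0 < CV -> 0 < s -> regular N V s CV ->
  (forall x y, -1 <= x <= 0 -> s <= y <= 10 ->
     1 <= (CV+1)^2 * (-x + y) * (Gf N V x y)^2 /\ (Gf N V x y)^2 * (-x+y) <= (CV+1)^2) /\
  (forall x y, 0 <= x <= 1 -> sqrt s * sqrt x + s <= y <= 10 ->
     x + y <= (CV+1)^2*y^2*(Gf N V x y)^2 /\ y^2*(Gf N V x y)^2 <= (CV+1)^2*(x+y)) /\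
  (forall i, (i<N)%nat -> V i < -1 \/ -s < V i).
Proof. intros HN HCV Hs (R1 & R2 & R3 & _).
  assert (HC2 : CV^2 <= (CV+1)^2) by nra.
  split; [|split].
  - intros x y Hx Hy. destruct (R1 x y Hx Hy) as [A B]. rewrite mV_im_Gf in A, B.
    rewrite Rabs_left1 in A, B by lra.
    set (q := -x + y) in *. set (G := Gf N V x y) in *.
    assert (Hq : 0 < q) by (unfold q; lra). set (r := sqrt q).
    assert (Hr : 0 < r) by (apply sqrt_lt_R0; auto). assert (Hr2 : r*r = q) by (apply sqrt_sqrt; lra).
    fold r in A, B. pose proof (Gf_nonneg N V x y) as G0. fold G in G0.
    assert (A' : 1 <= CV * r * G).
    { assert (/CV * (y/r) * (CV * r) <= y * G * (CV * r)) by (apply Rmult_le_compat_r; nra).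
      replace (/CV * (y/r) * (CV * r)) with y in H by (field; lra).
      assert (0 < y) by lra. nra. }
    assert (B' : G * r <= CV).
    { assert (y * G * r <= CV * (y/r) * r) by (apply Rmult_le_compat_r; lra).
      replace (CV * (y/r) * r) with (CV*y) in H by (field; lra).
      assert (0 < y) by lra. nra. }
    split.
    + assert (1 <= (CV*r*G)^2) by nra. replace ((CV*r*G)^2) with (CV^2*(r*r)*G^2) in H by ring.
      rewrite Hr2 in H. assert (0 <= q*G^2) by nra. nra.
    + assert ((G*r)^2 <= CV^2) by nra. replace ((G*r)^2) with (G^2*(r*r)) in H by ring. rewrite Hr2 in H. lra.
  - intros x y Hx Hy. assert (Hy0 : s <= y). { assert (0 <= sqrt s * sqrt x) by (apply Rmult_le_pos; apply sqrt_pos). lra. }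
    destruct (R2 x y Hx) as [A B]. { rewrite Rabs_right by lra. auto. } rewrite mV_im_Gf in A, B.
    rewrite Rabs_right in A, B by lra.
    set (q := x + y) in *. set (G := Gf N V x y) in *.
    assert (Hq : 0 < q) by (unfold q; lra). set (r := sqrt (q)).
    assert (Hr : 0 < r) by (apply sqrt_lt_R0; auto). assert (Hr2 : r*r = q) by (apply sqrt_sqrt; lra).
    fold r in A, B. pose proof (Gf_nonneg N V x y) as G0. fold G in G0.
    assert (HyG : 0 <= y*G) by nra.
    split.
    + assert (Hr3 : r <= CV * (y*G)).
      { apply Rmult_le_reg_l with (/CV). apply Rinv_0_lt_compat; lra.
        rewrite <- Rmult_assoc, Rinv_l, Rmult_1_l; lra. }
      assert (Hr4 : r*r <= (CV*(y*G))^2) by nra. rewrite Hr2 in Hr4.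
      replace ((CV * (y * G)) ^ 2) with (CV^2*y^2*G^2) in Hr4 by ring.
      assert (0 <= y^2*G^2) by nra. nra.
    + assert (Hr4 : (y*G)^2 <= (CV*r)^2) by (apply pow_incr; lra).
      replace ((CV*r)^2) with (CV^2*(r*r)) in Hr4 by ring. rewrite Hr2 in Hr4.
      replace ((y*G)^2) with (y^2*G^2) in Hr4 by ring. nra.
  - intros i Hi. pose proof (R3 i Hi). destruct (Rlt_le_dec (V i) (-1)); [left; auto|right].
    destruct (Rle_lt_dec (V i) (-s)); [exfalso; apply H; lra| lra].
Qed.

Lemma big_N (M : R) : exists N0 : nat, (1 <= N0)%nat /\ forall N, (N0 <= N)%nat -> M < ln (INR N).
Proof.
  destruct (archimed (exp M)) as [H1 _].
  assert (0 < exp M) by apply exp_pos.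
  exists (S (Z.to_nat (up (exp M)))). split. lia. intros N HN.
  assert (INR N > exp M).
  { apply le_INR in HN. rewrite S_INR, INR_IZR_INZ, Z2Nat.id in HN. lra. apply le_IZR; lra. }
  rewrite <- (ln_exp M). apply ln_increasing; auto. Qed.

Theorem lemma7p1 :
  forall (phis omega CV : R),
    0 < phis <= 2/3 ->
    0 < 1/3 - omega < phis / 2 ->
    0 < CV ->
    exists (C : R) (N0 : nat), 0 < C /\
      forall (N : nat) (V : nat -> R) (mre mim : R -> R -> R) (am E a b : R),
        (N0 <= N)%nat ->
        sorted_V N V ->
        regular N V (Rpower (INR N) (- phis)) CV ->
        is_mfc N V (Rpower (INR N) (omega - 1/3)) mre mim ->
        is_xi_minus N V (Rpower (INR N) (omega - 1/3)) am ->
        xi_boundary (Rpower (INR N) (omega - 1/3)) mre mim E a b ->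
        am <= a <= 3/4 ->
        / C * (Rpower (INR N) (omega - 1/3) * sqrt (Rabs (a - am))) <= b /\
        b <= C * (Rpower (INR N) (omega - 1/3) * sqrt (Rabs (a - am))).
Proof.
  intros phis omega CV Hphi Hom HCV.
  set (K := CV + 1). set (al := 1/3 - omega). set (be := phis - 2*al).
  assert (HK : 1 <= K) by (unfold K; lra).
  assert (Hal : 0 < al) by (unfold al; lra). assert (Hbe : 0 < be) by (unfold be, al; lra).
  assert (HK4 : 0 < 100*K^4) by (assert (1 <= K^4) by (apply pow_R1_Rle; auto); lra).
  assert (HK2 : 0 < 64*K^2) by nra.
  destruct (big_N (Rmax (ln (100*K^4) / al) (ln (64*K^2) / be))) as [N0 [HN0 HN0']].
  exists (1000000*K^14), N0. split.
  { assert (1 <= K^14) by (apply pow_R1_Rle; auto). lra. }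
  intros N V mre mim am E a b HN _ Hreg Hmfc Hxim Hxb Ha.
  assert (HNpos : (0 < N)%nat) by lia.
  pose proof (HN0' N HN) as HLN. set (LN := ln (INR N)) in *.
  assert (HL1 : ln (100*K^4) <= al * LN).
  { assert (ln (100*K^4) / al <= LN) by (apply Rlt_le, Rle_lt_trans with (2 := HLN); apply Rmax_l).
    apply Rmult_le_compat_l with (r := al) in H; [|lra]. replace (al * (ln (100 * K ^ 4) / al)) with (ln (100*K^4)) in H by (field; lra). auto. }
  assert (HL2 : ln (64*K^2) <= be * LN).
  { assert (ln (64*K^2) / be <= LN) by (apply Rlt_le, Rle_lt_trans with (2 := HLN); apply Rmax_r).
    apply Rmult_le_compat_l with (r := be) in H; [|lra]. replace (be * (ln (64*K^2) / be)) with (ln (64*K^2)) in H by (field; lra). auto. }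
  set (t := Rpower (INR N) (omega - 1/3)) in *. set (s := Rpower (INR N) (- phis)) in *.
  assert (Ht : t = exp (- al * LN)) by (unfold t, Rpower, al, LN; f_equal; ring).
  assert (Hs : s = exp (- phis * LN)) by (unfold s, Rpower, LN; f_equal).
  assert (Ht0 : 0 < t) by (rewrite Ht; apply exp_pos). assert (Hs0 : 0 < s) by (rewrite Hs; apply exp_pos).
  assert (Htb : t <= /(100*K^4)).
  { rewrite Ht. rewrite <- (exp_ln (100*K^4)) by lra. rewrite <- exp_Ropp. apply exp_le'. lra. }
  assert (Hsb : s <= t^2/(64*K^2)).
  { assert (64*K^2*s <= t^2).
    { rewrite Ht, Hs. rewrite <- (exp_ln (64*K^2)) at 1 by lra. rewrite <- exp_plus.
      replace ((exp (- al * LN))^2) with (exp (- al * LN) * exp (- al * LN)) by ring. rewrite <- exp_plus.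
      apply exp_le'. unfold be in HL2. nra. }
    apply Rmult_le_reg_l with (64*K^2); auto. replace (64 * K ^ 2 * (t ^ 2 / (64 * K ^ 2))) with (t^2) by (field; lra). auto. }
  destruct (reg_conv N V s CV HNpos HCV Hs0 Hreg) as (R1 & R2 & R3). fold K in R1, R2.
  assert (HS : Setup N V K t s) by (exact (conj HNpos (conj HK (conj Ht0 (conj Htb (conj Hs0 (conj Hsb (conj R1 (conj R2 R3))))))))).
  destruct Hxim as (Ham & Hne & Heq).
  assert (Heq' : t * Gf N V am 0 = 1).
  { rewrite Heq. unfold Gf, avg. f_equal. f_equal. apply rsum_ext. intros; f_equal; ring. }
  pose proof (limit_facts N V t mre mim E a b HNpos Ht0 Hmfc Hxb) as HLf.
  assert (HL : Lhyp N V t a b) by exact HLf.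
  destruct (static N V K t s am a b HS Ham Hne Heq' Ha HL) as [B1 B2].
  rewrite Rabs_right by lra.
  pose proof (proj1 HL). assert (1 <= K^14) by (apply pow_R1_Rle; auto).
  apply final_sqrt; lra.
Qed.
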